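(* Let $K$ be an infinite field with $\mathrm{char}(K)\neq 2$. Let $Q\in\mathcal{Q}(n,d,m)$ and let $h$ be a closed path in $Q$ with $h\not\equiv 0$. Then $\deg(h)\leq M(n,d,m)$, where $M(n,d,m)=2n$ if $n=m$ and $d\in\{n,n+1\}$, and $M(n,d,m)=3n$ otherwise.
   Context: A quiver $Q$ is a finite oriented graph; for an arrow $a$, $a''$ is its tail and $a'$ its head. A path $a=a_1\cdots a_s$ ($a_i$ arrows) satisfies $a_i'=a_{i+1}''$; it is closed (in the vertex $a_1''$) if $a_1''=a_s'$; $\deg(a)=s$, $a''=a_1''$, $a'=a_s'$, $V(a)=\{a_1'',a_1',\dots,a_s'\}$. A closed path $a$ is primitive if for every $w\in V(a)$ exactly one $i$ has $a_i'=w$. $m(Q)$ is the maximal degree of a primitive closed path in $Q$; $Q$ is strongly connected if some closed path contains all vertices; $\mathcal{Q}(n,d,m)$ is the set of strongly connected quivers with $n$ vertices, $d$ arrows and $m(Q)=m$. Closed paths are incident if they are closed paths in the same vertex. The equivalence $\equiv$ is the equivalence relation on the set of closed paths of $Q$ together with the symbol $0$ (elements taken up to sign, with $-0=0$) generated by: (1) $ab\equiv ba$ for paths $a,b$ such that $ab$ is a closed path; (2) $a_{\sigma(1)}\cdots a_{\sigma(t)}\equiv \mathrm{sign}(\sigma)\,a_1\cdots a_t$ for incident closed paths $a_1,\dots,a_t$, $t\geq2$, $\sigma\in S_t$; (3) $a_1^2a_2\equiv0$ for incident closed paths $a_1,a_2$; (4) if $\mathrm{char}(K)=2$ then $a_1^2\equiv0$,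 and if $\mathrm{char}(K)\neq2$ then $a_1a_2a_3a_4\equiv0$, for incident closed paths $a_1,\dots,a_4$. *)

(* Defs.v *)
From HB Require Import structures.
From mathcomp Require Import all_boot all_order all_algebra all_fingroup.
From Stdlib Require Import Relations.
Set Implicit Arguments. Unset Strict Implicit. Unset Printing Implicit Defensive.

(* A quiver with vertex set 'I_n and arrow set 'I_d; for an arrow a,
   tl a = a'' (tail) and hd a = a' (head). *)
Record quiver (n d : nat) := Quiver { tl : 'I_d -> 'I_n; hd : 'I_d -> 'I_n }.

Section QuiverDefs.
Variables (n d : nat) (Q : quiver n d).

Definition is_path (p : seq 'I_d) : bool :=
  if p is a :: p' then path (fun x y => hd Q x == tl Q y) a p' else false.

Definition ptail (p : seq 'I_d) : option 'I_n :=
  if p is a :: _ then Some (tl Q a) else None.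

Definition closedp (p : seq 'I_d) : bool :=
  if p is a :: p' then is_path p && (hd Q (last a p') == tl Q a) else false.

Definition closed_at (v : 'I_n) (p : seq 'I_d) : bool :=
  closedp p && (ptail p == Some v).

Definition deg (p : seq 'I_d) : nat := size p.

Definition Vset (p : seq 'I_d) : seq 'I_n :=
  if p is a :: _ then tl Q a :: map (hd Q) p else [::].

Definition primitive (p : seq 'I_d) : bool :=
  closedp p && all (fun w => count (fun a => hd Q a == w) p == 1%N) (Vset p).

Definition strongly_connected : Prop :=
  exists p, closedp p /\ forall v : 'I_n, v \in Vset p.

Definition mQ_is (m : nat) : Prop :=
  (exists p, primitive p /\ deg p = m) /\
  (forall p, primitive p -> deg p <= m).

Definition in_Qndm (m : nat) : Prop := strongly_connected /\ mQ_is m.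

(* closedp paths (with a sign) together with the symbol 0 *)
Inductive selt := Zero | Sgn of bool & seq 'I_d.  (* Sgn true p = - p *)

Definition sneg (x : selt) : selt :=
  match x with Zero => Zero | Sgn b p => Sgn (~~ b) p end.

(* generating relations of the equivalence; char2 = (char K == 2) *)
Inductive qstep (char2 : bool) : selt -> selt -> Prop :=
| qs_rot (a b : seq 'I_d) :
    is_path a -> is_path b -> closedp (a ++ b) ->
    qstep char2 (Sgn false (a ++ b)) (Sgn false (b ++ a))
| qs_perm (v : 'I_n) (t : nat) (a : 'I_t -> seq 'I_d) (s : 'S_t) :
    (2 <= t)%N -> (forall i, closed_at v (a i)) ->
    qstep char2 (Sgn false (flatten [seq a (s i) | i <- enum 'I_t]))
                (Sgn (odd_perm s) (flatten [seq a i | i <- enum 'I_t]))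
| qs_sq (v : 'I_n) (a1 a2 : seq 'I_d) :
    closed_at v a1 -> closed_at v a2 ->
    qstep char2 (Sgn false (a1 ++ a1 ++ a2)) Zero
| qs_char2 (v : 'I_n) (a1 : seq 'I_d) :
    char2 -> closed_at v a1 ->
    qstep char2 (Sgn false (a1 ++ a1)) Zero
| qs_four (v : 'I_n) (a1 a2 a3 a4 : seq 'I_d) :
    ~~ char2 -> closed_at v a1 -> closed_at v a2 -> closed_at v a3 ->
    closed_at v a4 ->
    qstep char2 (Sgn false (a1 ++ a2 ++ a3 ++ a4)) Zero
| qs_neg (x y : selt) : qstep char2 x y -> qstep char2 (sneg x) (sneg y).

Definition qequiv (K : fieldType) : relation selt :=
  clos_refl_sym_trans selt (qstep (2 \in [pchar K]%R)%N).

End QuiverDefs.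

Definition Mbound (n d m : nat) : nat :=
  if (n == m) && ((d == n) || (d == n.+1)) then 2 * n else 3 * n.

(* Main.v *)
Require Import Defs.
From HB Require Import structures.
From mathcomp Require Import all_boot all_order all_algebra all_fingroup.
From Stdlib Require Import Relations.
Set Implicit Arguments. Unset Strict Implicit. Unset Printing Implicit Defensive.

Section Aux.
Variables (n d : nat) (Q : quiver n d).

Definition endv (p : seq 'I_d) : option 'I_n :=
  if p is a :: p' then Some (hd Q (last a p')) else None.

Lemma closedpE p : closedp Q p = is_path Q p && (endv p == ptail Q p).
Proof. by case: p => // a p /=. Qed.

Lemma closed_atE v p : closed_at Q v p = [&& is_path Q p, ptail Q p == Some v & endv p == Some v].
Proof.
rewrite /closed_at closedpE; case: (is_path Q p) => //=.
move: (endv p) (ptail Q p) => x y.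
case: (x =P y) => [->|nxy]; first by rewrite andbb.
case: (y =P Some v) => [Hy|] //=; case: (x =P Some v) => // Hx; case: nxy; congruence.
Qed.

Lemma ptail_cat a b : a != [::] -> ptail Q (a ++ b) = ptail Q a.
Proof. by case: a. Qed.

Lemma endv_cat a b : b != [::] -> endv (a ++ b) = endv b.
Proof.
case: b => // y b _; case: a => //= x a.
by rewrite last_cat.
Qed.

Lemma is_path_cat a b : a != [::] -> b != [::] ->
  is_path Q (a ++ b) = [&& is_path Q a, is_path Q b & endv a == ptail Q b].
Proof.
case: a => // x a _; case: b => // y b _ /=.
rewrite cat_path /=; case: (path _ x a) => //=.
by rewrite andbC.
Qed.

Lemma is_path_nil p : is_path Q p -> p != [::].
Proof. by case: p. Qed.

Lemma rcons_nil (s : seq 'I_d) x : rcons s x != [::].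
Proof. by case: s. Qed.

Lemma endv_rcons s x : endv (rcons s x) = Some (hd Q x).
Proof. by case: s => //= y s; rewrite last_rcons. Qed.

End Aux.

Section Eqv.
Variables (n d : nat) (Q : quiver n d) (char2 : bool).
Notation R := (clos_refl_sym_trans (selt d) (qstep Q char2)).
Definition cw v (p : seq 'I_d) := count (fun a => hd Q a == v) p.

Lemma closed_at_closedp v a : closed_at Q v a -> closedp Q a.
Proof. by case/andP. Qed.

Lemma closed_at_path v a : closed_at Q v a -> is_path Q a.
Proof. by rewrite closed_atE => /and3P[]. Qed.

Lemma closed_at_cat v a b : closed_at Q v a -> closed_at Q v b -> closed_at Q v (a ++ b).
Proof.
move=> Ha Hb; have na := is_path_nil (closed_at_path Ha).
have nb := is_path_nil (closed_at_path Hb).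
move: Ha Hb; rewrite !closed_atE is_path_cat // ptail_cat // endv_cat //.
by move=> /and3P[-> /eqP Pa /eqP Ea] /and3P[-> /eqP Pb /eqP Eb]; rewrite Pa Ea Pb Eb !eqxx.
Qed.

Lemma rot_eq a b : is_path Q a -> is_path Q b -> closedp Q (a ++ b) ->
  R (Sgn false (a ++ b)) (Sgn false (b ++ a)).
Proof. by move=> *; apply: rst_step; apply: qs_rot. Qed.

Lemma split_first v h : closed_at Q v h -> 1 < cw v h ->
  exists a b, h = a ++ b /\ closed_at Q v a /\ closed_at Q v b /\ cw v a = 1.
Proof.
move=> Hc Hn.
have Hh : has (fun a => hd Q a == v) h by rewrite has_count; apply: ltn_trans Hn.
move: Hc Hn; case: (split_find Hh) => x s1 s2 px nh Hc Hn.
have ca : cw v (rcons s1 x) = 1.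
  by rewrite /cw -cats1 count_cat /= px; move: nh; rewrite has_count; case: count.
have n2 : s2 != [::].
  by case: s2 Hc Hn => //; rewrite cats0 ca.
exists (rcons s1 x), s2; split => //.
move: Hc; rewrite !closed_atE is_path_cat ?rcons_nil // ptail_cat ?rcons_nil //.
rewrite endv_cat // endv_rcons (eqP px).
by case/and3P => /and3P [-> -> /eqP <-] -> ->; rewrite !eqxx.
Qed.

Lemma cw_cat v a b : cw v (a ++ b) = cw v a + cw v b.
Proof. exact: count_cat. Qed.

Lemma Z4 v h : ~~ char2 -> closed_at Q v h -> 3 < cw v h -> R (Sgn false h) (Zero d).
Proof.
move=> c2 Hc Hn.
have [a1 [r1 [E1 [H1 [Hr1 C1]]]]] := split_first Hc (ltn_trans (isT : 1 < 3) Hn).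
subst h; rewrite cw_cat C1 in Hn.
have [a2 [r2 [E2 [H2 [Hr2 C2]]]]] := split_first Hr1 (ltn_trans (isT : 1 < 2) Hn).
subst r1; rewrite cw_cat C2 in Hn.
have [a3 [a4 [E3 [H3 [H4 C3]]]]] := split_first Hr2 Hn.
subst r2; apply: rst_step; exact: (qs_four c2 H1 H2 H3 H4).
Qed.

Lemma Z3 v a1 a2 a3 : closed_at Q v a1 -> closed_at Q v a2 -> closed_at Q v a3 ->
  (a1 = a2 \/ a2 = a3 \/ a1 = a3) -> R (Sgn false (a1 ++ a2 ++ a3)) (Zero d).
Proof.
move=> H1 H2 H3 [E|[E|E]].
- subst a2; apply: rst_step; exact: (qs_sq _ H1 H3).
- subst a3; apply: (rst_trans _ _ _ (Sgn false ((a2 ++ a2) ++ a1)) _).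
    apply: rot_eq; [exact: closed_at_path H1| |].
      exact: (closed_at_path (closed_at_cat H2 H2)).
    exact: (closed_at_closedp (closed_at_cat H1 (closed_at_cat H2 H2))).
  rewrite -catA; apply: rst_step; exact: (qs_sq _ H2 H1).
- subst a3; apply: (rst_trans _ _ _ (Sgn false (a1 ++ (a1 ++ a2))) _).
    rewrite catA; apply: rot_eq; [|exact: closed_at_path H1|].
      exact: (closed_at_path (closed_at_cat H1 H2)).
    exact: (closed_at_closedp (closed_at_cat (closed_at_cat H1 H2) H1)).
  apply: rst_step; exact: (qs_sq _ H1 H2).
Qed.

Lemma rot_to v h : closedp Q h -> 0 < cw v h ->
  exists h', [/\ closed_at Q v h', forall u, cw u h' = cw u h, size h' = size h &
              R (Sgn false h) (Sgn false h')].
Proof.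
move=> Hc Hn.
have Hh : has (fun a => hd Q a == v) h by rewrite has_count.
move: Hc Hn; case: (split_find Hh) => x s1 s2 px nh Hc Hn.
case: (eqVneq s2 [::]) => [E2|n2]; first subst s2.
  have Hc' : closedp Q (rcons s1 x) by move: Hc; rewrite ?cats0.
  exists (rcons s1 x); rewrite ?cats0; split => //; last exact: rst_refl.
  rewrite /closed_at Hc' /=; move: Hc'; rewrite closedpE endv_rcons => /andP[_ /eqP <-].
  by rewrite (eqP px).
have Hp := Hc; rewrite closedpE is_path_cat ?rcons_nil // in Hp.
case/andP: Hp => /and3P [P1 P2 /eqP J] /eqP E.
exists (s2 ++ rcons s1 x); split.
- rewrite closed_atE is_path_cat ?rcons_nil // P1 P2 ptail_cat // endv_cat ?rcons_nil //.
  rewrite -J endv_rcons (eqP px) eqxx /=.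
  by move: E; rewrite endv_cat // ptail_cat ?rcons_nil // => ->; rewrite eqxx.
- by move=> u; rewrite /cw !count_cat addnC.
- by rewrite !size_cat addnC.
- exact: rot_eq.
Qed.

End Eqv.

Section Struct.
Variables (n d : nat) (Q : quiver n d).

Lemma sum_cw h : \sum_(v : 'I_n) cw Q v h = size h.
Proof.
elim: h => [|x h IH]; first by rewrite big1.
rewrite /cw /=; under eq_bigr do rewrite /= .
rewrite big_split /= -/(cw Q _ _).
have -> : \sum_(i < n) count (fun a => hd Q a == i) h = size h by exact: IH.
rewrite (bigD1 (hd Q x)) //= eqxx big1 ?add1n ?addn0 // => v.
by rewrite eq_sym => /negbTE ->.
Qed.

Lemma pigeon k h : (forall v, cw Q v h <= k) -> size h <= k * n.
Proof.
move=> H; rewrite -sum_cw.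
apply: (@leq_trans (\sum_(v : 'I_n) k)); first by apply: leq_sum => v _.
by rewrite sum_nat_const card_ord mulnC.
Qed.

Lemma size1_eq (T : eqType) (s : seq T) x y : size s = 1 -> x \in s -> y \in s -> x = y.
Proof. by case: s => [|z [|]] //= _; rewrite !inE => /eqP -> /eqP ->. Qed.

Variable C : seq 'I_d.
Hypothesis Cprim : primitive Q C.
Hypothesis Csize : size C = n.

Lemma prim_count x : x \in C -> count (fun a => hd Q a == hd Q x) C = 1.
Proof.
move=> xC; case/andP: Cprim => _ /allP H.
apply/eqP/H; move: xC; case: C => // c C' xC /=.
by rewrite inE; apply/orP; right; apply: (map_f (hd Q) xC).
Qed.

Lemma C_inj x y : x \in C -> y \in C -> hd Q x = hd Q y -> x = y.
Proof.
move=> xC yC E.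
apply: (@size1_eq _ (filter (fun a => hd Q a == hd Q x) C)).
- by rewrite size_filter prim_count.
- by rewrite mem_filter eqxx.
- by rewrite mem_filter E eqxx.
Qed.

Lemma C_uniq_hd : uniq (map (hd Q) C).
Proof.
apply: count_mem_uniq => u.
case: (boolP (u \in map (hd Q) C)) => [/mapP [x xC ->]| nu].
  rewrite count_map /= -(prim_count xC); apply: eq_count => a /=.
  by rewrite eq_sym.
by apply/count_memPn.
Qed.

Lemma C_all u : u \in map (hd Q) C.
Proof.
have Hs : size (enum 'I_n) <= size (map (hd Q) C) by rewrite size_enum_ord size_map Csize.
have [_ ->] := @uniq_min_size _ (map (hd Q) C) (enum 'I_n) C_uniq_hd
  (fun x _ => mem_enum _ x) Hs.
by rewrite mem_enum.
Qed.

Lemma nC_uniq x y : d <= n.+1 -> x \notin C -> y \notin C -> x = y.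
Proof.
move=> Hd xC yC.
have U : uniq C by apply: map_uniq C_uniq_hd.
have H1 : #|[predC C]| <= 1.
  have := cardC (mem C); rewrite card_ord (card_uniqP U) Csize.
  move=> E; rewrite -(leq_add2l n) E addn1 //.
move/card_le1_eqP: H1 => H1.
by apply: H1; rewrite inE.
Qed.

End Struct.

Section AllC.
Variables (n d : nat) (Q : quiver n d).

Lemma tl_in P y : closedp Q P -> y \in P -> has (fun a => hd Q a == tl Q y) P.
Proof.
case: P => // x P' /andP [Hp He] /(nthP x) [[|i] Hi <-].
  apply/hasP; exists (last x P'); first exact: mem_last.
  exact: He.
apply/hasP; exists (nth x (x :: P') i); first by apply: mem_nth; apply: ltnW.
by move/(pathP x): Hp => /(_ i Hi).
Qed.

Lemma down (S : nat -> Prop) N : (forall i, i.+1 < N -> S i.+1 -> S i) ->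
  forall j, j < N -> S j -> forall i, i <= j -> S i.
Proof.
move=> st j jN Sj i ij.
have : forall k, forall i, i + k < N -> S (i + k) -> S i.
  elim=> [|k IH] i0; first by rewrite addn0.
  move=> H1 H2; apply: IH; first by apply: ltn_trans H1; rewrite addnS.
  by apply: st; rewrite -addnS.
move/(_ (j - i) i); rewrite subnKC //; by apply.
Qed.

Lemma allC C P : primitive Q C -> size C = n -> closedp Q P -> {subset P <= C} ->
  forall u, has (fun a => hd Q a == u) P.
Proof.
move=> Cp Cs Pc PC u.
have Cc : closedp Q C by case/andP: Cp.
case E: C Cc => [//|c C'] Cc.
pose S i := has (fun a => hd Q a == hd Q (nth c C i)) P.
have st : forall i, i.+1 < size C -> S i.+1 -> S i.
  move=> i Hi /hasP [z zP /eqP Hz].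
  have zi : z = nth c C i.+1 by apply: (C_inj Cp) => //; [exact: PC | exact: mem_nth].
  rewrite /S; have := tl_in Pc zP; rewrite zi.
  move: Cc; rewrite E /= => /andP [Hp _].
  move/(pathP c): Hp => /(_ i); rewrite E /= in Hi => /(_ Hi) /eqP ->.
  by [].
have N1 : 0 < size C by rewrite E.
have S0 : S 0.
  have [z0 z0P] : exists z0, z0 \in P.
    by move: Pc; case: (P) => // z0 ? _; exists z0; exact: mem_head.
  have /(nthP c) [j Hj Ej] := PC z0 z0P.
  apply: (down st Hj) => //; rewrite /S Ej; apply/hasP; exists z0 => //.
have Sl : S (size C).-1.
  move: S0; rewrite /S nth_last E /= => /hasP [z zP /eqP Hz].
  have zc : z = c by apply: (C_inj Cp) => //; [exact: PC | rewrite E mem_head].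
  have := tl_in Pc zP; rewrite zc.
  by move: Cc => /andP [_ /eqP ->].
have /mapP [x xC ->] := C_all Cp Cs u.
have /(nthP c) [i Hi <-] := xC.
apply: (down st _ Sl); first by rewrite prednK.
by rewrite -ltnS prednK.
Qed.

End AllC.

Section Rdet.
Variables (n d : nat) (Q : quiver n d).

Lemma path_rcons2 p z y : is_path Q (rcons (rcons p z) y) ->
  is_path Q (rcons p z) /\ hd Q z = tl Q y.
Proof.
rewrite -[rcons (rcons p z) y]cats1 is_path_cat ?rcons_nil // endv_rcons /=.
by case/andP => -> /eqP [].
Qed.

Lemma ptail_rcons p z y : ptail Q (rcons (rcons p z) y) = ptail Q (rcons p z).
Proof. by rewrite -cats1 ptail_cat ?rcons_nil. Qed.

Variable G : pred 'I_n.
Hypothesis Ginj : forall x y, G (hd Q x) -> hd Q x = hd Q y -> x = y.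

Lemma rdet p : forall q y s, is_path Q (rcons p y) -> is_path Q (rcons q y) ->
  ptail Q (rcons p y) = Some s -> ptail Q (rcons q y) = Some s ->
  all (fun x => G (hd Q x) && (hd Q x != s)) p ->
  all (fun x => G (hd Q x) && (hd Q x != s)) q -> p = q.
Proof.
elim/last_ind: p => [|p z1 IH] q y s.
  case/lastP: q => [//|q z2] _ Pq /= [Ey] _ _.
  case/path_rcons2: Pq => _ Hz; rewrite all_rcons Hz Ey eqxx. by rewrite andbF.
case/lastP: q => [|q z2] Pp Pq.
  move=> _ /= [Ey] Ap _; case/path_rcons2: Pp => _ Hz.
  by move: Ap; rewrite all_rcons Hz Ey eqxx andbF.
rewrite !ptail_rcons => T1 T2.
rewrite !all_rcons => /andP [/andP [G1 _] A1] /andP [_ A2].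
case/path_rcons2: Pp => P1 H1; case/path_rcons2: Pq => P2 H2.
have Ez : z1 = z2 by apply: Ginj G1 _; rewrite H1 H2.
subst z2; congr rcons; exact: (IH q z1 s).
Qed.

End Rdet.

Section Pieces.
Variables (n d : nat) (Q : quiver n d).

Lemma piece_dec w a : closed_at Q w a -> cw Q w a = 1 ->
  exists p y, [/\ a = rcons p y, hd Q y = w,
    all (fun x => (hd Q x != w) && (hd Q x != w)) p,
    is_path Q (rcons p y) & ptail Q (rcons p y) = Some w].
Proof.
case/lastP: a => [|p y]; first by rewrite closed_atE.
rewrite closed_atE endv_rcons => /and3P [P1 /eqP T1 /eqP [Hy]] Hc.
exists p, y; split => //.
apply/allP => x xp; rewrite andbb; apply/negP => /eqP Hx.
move: Hc; rewrite /cw -cats1 count_cat /= Hy eqxx addn1 => [[]] /eqP.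
move=> /eqP /(introT eqP); rewrite -[_ == 0]negbK -lt0n -has_count => /negP; apply.
by apply/hasP; exists x => //; rewrite Hx.
Qed.

Variable C : seq 'I_d.
Hypothesis Cp : primitive Q C.

Lemma pieces w a1 a2 a3 : (forall x, x \notin C -> hd Q x = w) ->
  (forall x y, x \notin C -> y \notin C -> x = y) ->
  closed_at Q w a1 -> closed_at Q w a2 -> closed_at Q w a3 ->
  cw Q w a1 = 1 -> cw Q w a2 = 1 -> cw Q w a3 = 1 ->
  a1 = a2 \/ a2 = a3 \/ a1 = a3.
Proof.
move=> Hw Hnc H1 H2 H3 C1 C2 C3.
have Ginj : forall x y, (hd Q x != w) -> hd Q x = hd Q y -> x = y.
  move=> x y Hx Exy; apply: (C_inj Cp) => //.
    by apply/negP => /negP /Hw E; rewrite E eqxx in Hx.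
  by apply/negP => /negP /Hw E; rewrite Exy E eqxx in Hx.
have eqy : forall y1 y2, hd Q y1 = w -> hd Q y2 = w -> (y1 \in C) = (y2 \in C) -> y1 = y2.
  move=> y1 y2 E1 E2; case: (boolP (y1 \in C)) => I1; case: (boolP (y2 \in C)) => I2 //.
  by move=> _; apply: (C_inj Cp) => //; rewrite E1 E2.
  by move=> _; apply: Hnc.
have eqa : forall p1 y1 p2 y2, is_path Q (rcons p1 y1) -> is_path Q (rcons p2 y2) ->
   ptail Q (rcons p1 y1) = Some w -> ptail Q (rcons p2 y2) = Some w ->
   all (fun x => (hd Q x != w) && (hd Q x != w)) p1 ->
   all (fun x => (hd Q x != w) && (hd Q x != w)) p2 -> y1 = y2 ->
   rcons p1 y1 = rcons p2 y2.
  move=> p1 y1 p2 y2 P1 P2 T1 T2 A1 A2 E; subst y2.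
  by congr rcons; apply: (@rdet _ _ Q (fun v => v != w) Ginj p1 p2 y1 w).
have [p1 [y1 [E1 Y1 A1 P1 T1]]] := piece_dec H1 C1.
have [p2 [y2 [E2 Y2 A2 P2 T2]]] := piece_dec H2 C2.
have [p3 [y3 [E3 Y3 A3 P3 T3]]] := piece_dec H3 C3.
subst a1 a2 a3.
have H12 := eqy y1 y2 Y1 Y2; have H23 := eqy y2 y3 Y2 Y3; have H13 := eqy y1 y3 Y1 Y3.
move: H12 H23 H13; case: (y1 \in C); case: (y2 \in C); case: (y3 \in C) => H12 H23 H13.
all: first [ left; apply: eqa; by [|apply: H12]
           | right; left; apply: eqa; by [|apply: H23]
           | right; right; apply: eqa; by [|apply: H13] ].
Qed.

End Pieces.

Theorem lemma2p4 (K : fieldType)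
  (K_infinite : forall s : seq K, exists x : K, x \notin s)
  (K_char : (2 \notin [pchar K]%R)%N)
  (n d m : nat) (Q : quiver n d) (HQ : in_Qndm Q m)
  (h : seq 'I_d) (h_closed : closedp Q h)
  (h_nz : ~ qequiv Q K (Sgn false h) (Zero _)) :
  deg h <= Mbound n d m.
Proof.
set c2 := (2 \in [pchar K]%R)%N.
have Zgen : forall v h, closedp Q h -> 3 < cw Q v h -> qequiv Q K (Sgn false h) (Zero _).
  move=> v h0 Hc Hn.
  have [h' [Hc' Hcw _ Hr]] := rot_to c2 Hc (ltn_trans (isT : 0 < 3) Hn).
  apply: (rst_trans _ _ _ _ _ Hr); apply: (Z4 (v := v)) => //.
  by rewrite Hcw.
rewrite /deg /Mbound; apply: contraT; rewrite -ltnNge => Hs; exfalso; apply: h_nz.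
case: ifP => [/andP [/eqP Enm Hd] | _] in Hs.
-
  subst m; case: HQ => _ [[C [Cp Cs]] _]; rewrite /deg in Cs.
  have Hd' : d <= n.+1 by case/orP: Hd => /eqP ->.
  have Hnc := nC_uniq Cp Cs Hd'.
  have [v Hv] : exists v, 2 < cw Q v h.
    case: (pickP (fun v => 2 < cw Q v h)) => [v Hv | H0]; first by exists v.
    suff : size h <= 2 * n by rewrite leqNgt Hs.
    apply: (pigeon (Q := Q)).
    by move=> v; move: (H0 v) => /= /negbT; rewrite -leqNgt.
  have [w [Hw Hw3]] : exists w, (forall x, x \notin C -> hd Q x = w) /\ 2 < cw Q w h.
    case: (pickP (fun x => x \notin C)) => [b bnC | H0].
      exists (hd Q b); split; first by move=> x xnC; rewrite (Hnc x b).
      have [h' [Hc' Hcw _ _]] := rot_to c2 h_closed (ltn_trans (isT : 0 < 2) Hv).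
      have Hv' : 1 < cw Q v h' by rewrite Hcw; apply: ltn_trans Hv.
      have [a1 [r1 [E1 [H1 [Hr1 C1]]]]] := split_first Hc' Hv'.
      have Hr1' : 1 < cw Q v r1.
        by move: Hv; rewrite -Hcw E1 cw_cat C1.
      have [a2 [a3 [E2 [H2 [H3 _]]]]] := split_first Hr1 Hr1'.
      have pos : forall a, closed_at Q v a -> 0 < cw Q (hd Q b) a.
        move=> a Ha; rewrite /cw -has_count.
        case: (boolP (all (fun x => x \in C) a)) => [/allP Hall | ].
          by apply: (allC Cp Cs (closed_at_closedp Ha)) => x /Hall.
        rewrite -has_predC => /hasP [x xa /= xnC]; apply/hasP; exists x => //.
        by rewrite (Hnc x b).
      rewrite -Hcw E1 E2 !cw_cat.
      have := pos _ H1; have := pos _ H2; have := pos _ H3.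
      move: (cw Q (hd Q b) a1) (cw Q (hd Q b) a2) (cw Q (hd Q b) a3) => [|x1] [|x2] [|x3] // _ _ _; by rewrite !addSn !addnS.
    exists v; split => // x; by rewrite H0.
  case: (ltnP 3 (cw Q w h)) => [L4 | L3]; first exact: Zgen L4.
  have Hw3' : cw Q w h = 3 by apply/eqP; rewrite eqn_leq L3 Hw3.
  have [h' [Hc' Hcw _ Hr]] := rot_to c2 h_closed (ltn_trans (isT : 0 < 2) Hw3).
  apply: (rst_trans _ _ _ _ _ Hr).
  have Hv' : 1 < cw Q w h' by rewrite Hcw Hw3'.
  have [a1 [r1 [E1 [H1 [Hr1 C1]]]]] := split_first Hc' Hv'.
  have Cr1 : cw Q w r1 = 2 by move: (Hcw w); rewrite Hw3' E1 cw_cat C1 => [[]].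
  have [a2 [a3 [E2 [H2 [H3 C2]]]]] := split_first Hr1 (ltac:(by rewrite Cr1) : 1 < cw Q w r1).
  have C3 : cw Q w a3 = 1 by move: Cr1; rewrite E2 cw_cat C2 => [[]].
  subst h' r1; apply: (@Z3 _ _ Q c2 w) => //.
  exact: (pieces Cp Hw Hnc H1 H2 H3 C1 C2 C3).
-
  have [v Hv] : exists v, 3 < cw Q v h.
    case: (pickP (fun v => 3 < cw Q v h)) => [v Hv | H0]; first by exists v.
    suff : size h <= 3 * n by rewrite leqNgt Hs.
    apply: (pigeon (Q := Q)).
    by move=> v; move: (H0 v) => /= /negbT; rewrite -leqNgt.
  exact: Zgen Hv.
Qed.
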